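(* Let $d=1$. There is a constant $C$ such that for every admissible ball (interval) $B$ and every $y\in B$, $$ r_B\int_{\mathbb R\setminus 2B}\Big|\int_0^1\frac{r\,\partial_y\big(\psi(r,x,y)\,e^{-\phi(r,x,y)^2}\big)}{1-r^2}\,d\rho(r)\Big|\,dx\le C.$$
   Context: For $x,y\in\mathbb R$ and $r\in(0,1)$: $$\phi(r,x,y)=\frac{ry-x}{\sqrt{1-r^2}},\qquad \psi(r,x,y)=\frac{rx-y}{\sqrt{1-r^2}}.$$ The measure $\rho$ on $(0,1)$ is $d\rho(r)=\dfrac{dr}{r\sqrt{-\log r}}$. A ball (interval) $B$ with centre $c_B$ and radius $r_B$ is admissible if $r_B\le\min(1,1/|c_B|)$. $2B$ denotes the ball with the same centre and radius $2r_B$. *)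

(* Defs.v *)
From Stdlib Require Import Reals Lra.
Open Scope R_scope.

Definition phi (r x y : R) : R := (r * y - x) / sqrt (1 - r ^ 2).
Definition psi (r x y : R) : R := (r * x - y) / sqrt (1 - r ^ 2).

Definition rho_density (r : R) : R := / (r * sqrt (- ln r)).

(* Admissible interval B = B(c, rB) in dimension 1: rB <= min(1, 1/|c|)
   (with 1/|0| = +infinity), written without division. *)
Definition admissible (c rB : R) : Prop := 0 < rB /\ rB <= 1 /\ rB * Rabs c <= 1.

(* Lebesgue integral over (0,1) of a function f that is Riemann integrable on
   every compact subinterval: absolute integrability (bounded integrals of |f|
   over compacts) and value l = limit of the integrals over [u,v] as
   u -> 0+, v -> 1-.  For such f this is exactly "f is Lebesgue integrable on
   (0,1) with integral l". *)
Definition integral01 (f : R -> R) (l : R) : Prop :=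
  (forall u v, 0 < u -> u <= v -> v < 1 -> inhabited (Riemann_integrable f u v)) /\
  (exists M, forall u v (pr : Riemann_integrable (fun t => Rabs (f t)) u v),
      0 < u -> u <= v -> v < 1 -> RiemannInt pr <= M) /\
  (forall eps, eps > 0 -> exists delta, delta > 0 /\
     forall u v (pr : Riemann_integrable f u v),
       0 < u -> u < delta -> 1 - delta < v -> v < 1 ->
       Rabs (RiemannInt pr - l) < eps).

(* Main.v *)
Require Import Defs.
From Stdlib Require Import Reals.
From Stdlib Require Import Lra Lia ZArith Nsatz ClassicalEpsilon.
Open Scope R_scope.


Lemma FTC_loc (h F : R -> R) (a b : R) (pr : Riemann_integrable h a b) :
  a <= b -> (forall t, a <= t <= b -> continuity_pt h t) ->
  (forall t, a <= t <= b -> derivable_pt_lim F t (h t)) ->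
  RiemannInt pr = F b - F a.
Proof.
  intros Hab Hc HF.
  rewrite (RiemannInt_P20 Hab (FTC_P1 Hab Hc) pr).
  assert (H1 := RiemannInt_P29 Hab Hc).
  assert (H2 : antiderivative h F a b).
  { split; [|exact Hab]. intros t Ht.
    exists (exist _ (h t) (HF t Ht)). symmetry. apply derive_pt_eq_0. apply HF; auto. }
  destruct (antiderivative_Ucte h _ _ _ _ H1 H2) as [C HC].
  rewrite (HC b), (HC a); [ring| lra | lra].
Qed.

Definition lim01 (h : R -> R) (l : R) : Prop :=
  forall eps, eps > 0 -> exists delta, delta > 0 /\
     forall u v (pr : Riemann_integrable h u v),
       0 < u -> u < delta -> 1 - delta < v -> v < 1 ->
       Rabs (RiemannInt pr - l) < eps.

Lemma aux1 M e : 0 <= M -> 0 < e -> M * (2 * (e / (2 * M + 1))) < e.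
Proof. intros. set (q := e / (2*M+1)). assert (e = q * (2*M+1)) by (unfold q; field; lra).
  assert (0 < q) by (unfold q; apply Rdiv_lt_0_compat; lra). nra. Qed.
Lemma aux2 M e : 0 <= M -> 0 < e -> M * (2 * (e / (8 * M + 8))) <= e / 4.
Proof. intros. set (q := e / (8*M+8)). assert (e = q * (8*M+8)) by (unfold q; field; lra).
  assert (0 < q) by (unfold q; apply Rdiv_lt_0_compat; lra). nra. Qed.

Section Improper.
Variable h : R -> R.
Variable M : R.
Hypothesis Hc : forall t, 0 < t < 1 -> continuity_pt h t.
Hypothesis Hb : forall t, 0 < t < 1 -> Rabs (h t) <= M.

Lemma RI_in : forall p q, 0 < p < 1 -> 0 < q < 1 -> Riemann_integrable h p q.
Proof.
  intros p q Hp Hq. destruct (Rle_dec p q).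
  - apply continuity_implies_RiemannInt; auto. intros; apply Hc; lra.
  - apply RiemannInt_P1, continuity_implies_RiemannInt; [lra|]. intros; apply Hc; lra.
Qed.

Lemma int_bound_le : forall p q (pr : Riemann_integrable h p q),
  0 < p -> p <= q -> q < 1 -> Rabs (RiemannInt pr) <= M * (q - p).
Proof.
  intros p q pr Hp Hpq Hq.
  eapply Rle_trans. apply (RiemannInt_P17 pr (RiemannInt_P16 pr) Hpq).
  apply (RiemannInt_const_bound (l:=0) (u:=M) (RiemannInt_P16 pr) Hpq).
  intros t Ht. split; [apply Rabs_pos|apply Hb; lra].
Qed.

Lemma int_bound : forall p q (pr : Riemann_integrable h p q),
  0 < p < 1 -> 0 < q < 1 -> Rabs (RiemannInt pr) <= M * Rabs (q - p).
Proof.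
  intros p q pr Hp Hq. destruct (Rle_dec p q).
  - rewrite (Rabs_right (q - p)) by lra. apply int_bound_le; lra.
  - rewrite (RiemannInt_P8 pr (RiemannInt_P1 pr)). rewrite Rabs_Ropp.
    rewrite (Rabs_left (q - p)) by lra. replace (- (q - p)) with (p - q) by ring.
    apply int_bound_le; lra.
Qed.

Lemma M_nonneg : 0 <= M.
Proof. specialize (Hb (/2)). assert (0 < /2 < 1) by lra. specialize (Hb H).
  pose proof (Rabs_pos (h (/2))). lra. Qed.

Lemma int_diff : forall u v u' v' (pr : Riemann_integrable h u v)
   (pr' : Riemann_integrable h u' v'),
   0 < u < 1 -> 0 < v < 1 -> 0 < u' < 1 -> 0 < v' < 1 ->
   Rabs (RiemannInt pr - RiemannInt pr') <= M * (Rabs (u - u') + Rabs (v - v')).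
Proof.
  intros u v u' v' pr pr' Hu Hv Hu' Hv'.
  pose proof (RI_in u u' Hu Hu') as p1.
  pose proof (RI_in u' v Hu' Hv) as p2.
  pose proof (RI_in v' v Hv' Hv) as p3.
  pose proof (RiemannInt_P26 p1 p2 pr) as E1.
  pose proof (RiemannInt_P26 pr' p3 p2) as E2.
  pose proof (int_bound _ _ p1 Hu Hu') as B1.
  pose proof (int_bound _ _ p3 Hv' Hv) as B3.
  replace (RiemannInt pr - RiemannInt pr') with (RiemannInt p1 + RiemannInt p3) by lra.
  eapply Rle_trans. apply Rabs_triang.
  rewrite (Rabs_minus_sym u' u) in B1. rewrite Rmult_plus_distr_l.
  pose proof M_nonneg. nra.
Qed.

Lemma lim01_exists : exists l, lim01 h l.
Proof.
  set (t := fun n : nat => / (INR n + 4)).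
  assert (Ht : forall n, 0 < t n <= /4).
  { intros n. unfold t. pose proof (pos_INR n). split.
    apply Rinv_0_lt_compat; lra. apply Rinv_le_contravar; lra. }
  assert (Hint : forall n, Riemann_integrable h (t n) (1 - t n)).
  { intros n. apply RI_in; pose proof (Ht n); lra. }
  set (a := fun n => RiemannInt (Hint n)).
  assert (Hsmall : forall e, e > 0 -> exists N, forall n, (n >= N)%nat -> t n < e).
  { intros e He. destruct (archimed (/ e)) as [H1 _].
    assert (0 < IZR (up (/e))).
    { pose proof (Rinv_0_lt_compat e He). lra. }
    exists (Z.to_nat (up (/e))). intros n Hn.
    unfold t. apply le_INR in Hn. rewrite INR_IZR_INZ in Hn.
    rewrite Z2Nat.id in Hn. 2:{ apply le_IZR. lra. }
    rewrite <- (Rinv_inv e). apply Rinv_lt_contravar.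
    apply Rmult_lt_0_compat. apply Rinv_0_lt_compat; lra. pose proof (pos_INR n); lra.
    lra. }
  assert (Hcau : Cauchy_crit a).
  { intros e He.
    destruct (Hsmall (e / (2 * M + 1))) as [N HN].
    { apply Rdiv_lt_0_compat; pose proof M_nonneg; lra. }
    exists N. intros n m Hn Hm. unfold Rdist, a.
    pose proof (HN n Hn). pose proof (HN m Hm). pose proof (Ht n). pose proof (Ht m).
    eapply Rle_lt_trans. apply int_diff; lra.
    assert (Rabs (t n - t m) < e / (2 * M + 1)) by (apply Rabs_def1; lra).
    assert (Rabs (1 - t n - (1 - t m)) < e / (2 * M + 1)) by (apply Rabs_def1; lra).
    pose proof M_nonneg.
    assert (M * (Rabs (t n - t m) + Rabs (1 - t n - (1 - t m))) <= M * (2 * (e / (2*M+1)))).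
    { apply Rmult_le_compat_l; lra. }
    assert (M * (2 * (e / (2 * M + 1))) < e).
    { apply aux1; lra. }
    lra. }
  destruct (R_complete a Hcau) as [l Hl].
  exists l. intros e He.
  destruct (Hl (e/2)) as [N1 HN1]; [lra|].
  destruct (Hsmall (e / (8 * M + 8))) as [N2 HN2].
  { apply Rdiv_lt_0_compat; pose proof M_nonneg; lra. }
  set (N := max N1 N2).
  exists (t N). split; [apply Ht|].
  intros u v pr Hu0 Hu Hv Hv1.
  assert (HtN := HN2 N (Nat.le_max_r _ _)). assert (HN1' := HN1 N (Nat.le_max_l _ _)).
  unfold Rdist in HN1'. pose proof (Ht N).
  assert (Hd := int_diff u v (t N) (1 - t N) pr (Hint N) ltac:(lra) ltac:(lra) ltac:(lra) ltac:(lra)).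
  fold (a N) in Hd.
  assert (Rabs (u - t N) <= e / (8 * M + 8)) by (apply Rabs_le; lra).
  assert (Rabs (v - (1 - t N)) <= e / (8 * M + 8)) by (apply Rabs_le; lra).
  pose proof M_nonneg.
  assert (M * (Rabs (u - t N) + Rabs (v - (1 - t N))) <= M * (2 * (e / (8 * M + 8)))).
  { apply Rmult_le_compat_l; lra. }
  assert (M * (2 * (e / (8 * M + 8))) <= e / 4).
  { apply aux2; lra. }
  replace (RiemannInt pr - l) with ((RiemannInt pr - a N) + (a N - l)) by ring.
  eapply Rle_lt_trans. apply Rabs_triang. lra.
Qed.

End Improper.

Lemma lim01_le (h : R -> R) l K :
  (forall u v, 0 < u -> u <= v -> v < 1 -> Riemann_integrable h u v) ->
  lim01 h l ->
  (forall u v (pr : Riemann_integrable h u v), 0 < u -> u <= v -> v < 1 -> RiemannInt pr <= K) ->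
  l <= K.
Proof.
  intros Hi Hl HK. destruct (Rle_dec l K) as [|Hn]; [auto|].
  destruct (Hl (l - K)) as [d [Hd Hdd]]; [lra|].
  set (u := Rmin d (1/2) / 2).
  assert (0 < u) by (unfold u; unfold Rmin; destruct Rle_dec; lra).
  assert (u < d /\ u <= 1/4) by (unfold u; unfold Rmin; destruct Rle_dec; lra).
  pose proof (Hi u (1 - u) ltac:(lra) ltac:(lra) ltac:(lra)) as pr.
  specialize (Hdd u (1-u) pr ltac:(lra) ltac:(lra) ltac:(lra) ltac:(lra)).
  specialize (HK u (1-u) pr ltac:(lra) ltac:(lra) ltac:(lra)).
  apply Rabs_def2 in Hdd. lra.
Qed.

Lemma lim01_ge (h : R -> R) l K :
  (forall u v, 0 < u -> u <= v -> v < 1 -> Riemann_integrable h u v) ->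
  lim01 h l ->
  (forall u v (pr : Riemann_integrable h u v), 0 < u -> u <= v -> v < 1 -> K <= RiemannInt pr) ->
  K <= l.
Proof.
  intros Hi Hl HK. destruct (Rle_dec K l) as [|Hn]; [auto|].
  destruct (Hl (K - l)) as [d [Hd Hdd]]; [lra|].
  set (u := Rmin d (1/2) / 2).
  assert (0 < u) by (unfold u; unfold Rmin; destruct Rle_dec; lra).
  assert (u < d /\ u <= 1/4) by (unfold u; unfold Rmin; destruct Rle_dec; lra).
  pose proof (Hi u (1 - u) ltac:(lra) ltac:(lra) ltac:(lra)) as pr.
  specialize (Hdd u (1-u) pr ltac:(lra) ltac:(lra) ltac:(lra) ltac:(lra)).
  specialize (HK u (1-u) pr ltac:(lra) ltac:(lra) ltac:(lra)).
  apply Rabs_def2 in Hdd. lra.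
Qed.

Lemma lim01_diff (h1 h2 : R -> R) l1 l2 K :
  (forall u v, 0 < u -> u <= v -> v < 1 -> Riemann_integrable h1 u v) ->
  (forall u v, 0 < u -> u <= v -> v < 1 -> Riemann_integrable h2 u v) ->
  lim01 h1 l1 -> lim01 h2 l2 ->
  (forall u v (pr1 : Riemann_integrable h1 u v) (pr2 : Riemann_integrable h2 u v),
     0 < u -> u <= v -> v < 1 -> Rabs (RiemannInt pr1 - RiemannInt pr2) <= K) ->
  Rabs (l1 - l2) <= K.
Proof.
  intros Hi1 Hi2 Hl1 Hl2 HK. destruct (Rle_dec (Rabs (l1 - l2)) K) as [|Hn]; [auto|].
  set (e := (Rabs (l1 - l2) - K) / 2).
  destruct (Hl1 e) as [d1 [Hd1 Hdd1]]; [unfold e; lra|].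
  destruct (Hl2 e) as [d2 [Hd2 Hdd2]]; [unfold e; lra|].
  set (u := Rmin (Rmin d1 d2) (1/2) / 2).
  assert (0 < u) by (unfold u; unfold Rmin; repeat destruct Rle_dec; lra).
  assert (u < d1 /\ u < d2 /\ u <= 1/4) by (unfold u; unfold Rmin; repeat destruct Rle_dec; lra).
  pose proof (Hi1 u (1 - u) ltac:(lra) ltac:(lra) ltac:(lra)) as pr1.
  pose proof (Hi2 u (1 - u) ltac:(lra) ltac:(lra) ltac:(lra)) as pr2.
  specialize (Hdd1 u (1-u) pr1 ltac:(lra) ltac:(lra) ltac:(lra) ltac:(lra)).
  specialize (Hdd2 u (1-u) pr2 ltac:(lra) ltac:(lra) ltac:(lra) ltac:(lra)).
  specialize (HK u (1-u) pr1 pr2 ltac:(lra) ltac:(lra) ltac:(lra)).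
  assert (Rabs (l1 - l2) <= Rabs (l1 - RiemannInt pr1) + Rabs (RiemannInt pr1 - RiemannInt pr2)
           + Rabs (RiemannInt pr2 - l2)).
  { replace (l1 - l2) with ((l1 - RiemannInt pr1) + (RiemannInt pr1 - RiemannInt pr2)
           + (RiemannInt pr2 - l2)) by ring.
    eapply Rle_trans. apply Rabs_triang. apply Rplus_le_compat_r. apply Rabs_triang. }
  rewrite Rabs_minus_sym in Hdd1. unfold e in *. lra.
Qed.


Lemma dRinv t : t <> 0 -> derivable_pt_lim Rinv t (- / (t * t)).
Proof.
  intros Ht.
  assert (pr : derivable_pt (fun u => / id u) t).
  { apply (derivable_pt_inv id t Ht (derivable_pt_id t)). }
  pose proof (derive_pt_inv id t (derivable_pt_id t) Ht) as E.
  apply derive_pt_eq_1 with (pr := derivable_pt_inv id t Ht (derivable_pt_id t)).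
  rewrite E. rewrite derive_pt_id. unfold id, Rsqr. field. auto.
Qed.

Lemma dl_ext f x l l' : derivable_pt_lim f x l -> l = l' -> derivable_pt_lim f x l'.
Proof. intros H ->; auto. Qed.

Lemma dl_cst (c x : R) : derivable_pt_lim (fun _ => c) x 0.
Proof. apply (derivable_pt_lim_const c x). Qed.
Lemma dl_id x : derivable_pt_lim (fun t => t) x 1.
Proof. apply derivable_pt_lim_id. Qed.
Lemma dl_mul f g x a b : derivable_pt_lim f x a -> derivable_pt_lim g x b ->
  derivable_pt_lim (fun t => f t * g t) x (a * g x + f x * b).
Proof. intros; apply (derivable_pt_lim_mult f g); auto. Qed.
Lemma dl_plus f g x a b : derivable_pt_lim f x a -> derivable_pt_lim g x b ->
  derivable_pt_lim (fun t => f t + g t) x (a + b).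
Proof. intros; apply (derivable_pt_lim_plus f g); auto. Qed.
Lemma dl_minus f g x a b : derivable_pt_lim f x a -> derivable_pt_lim g x b ->
  derivable_pt_lim (fun t => f t - g t) x (a - b).
Proof. intros; apply (derivable_pt_lim_minus f g); auto. Qed.
Lemma dl_opp f x a : derivable_pt_lim f x a ->
  derivable_pt_lim (fun t => - f t) x (- a).
Proof. intros; apply (derivable_pt_lim_opp f); auto. Qed.
Lemma dl_inv f x a : derivable_pt_lim f x a -> f x <> 0 ->
  derivable_pt_lim (fun t => / f t) x (- / (f x * f x) * a).
Proof. intros H1 H2. apply (derivable_pt_lim_comp f Rinv); auto. apply dRinv; auto. Qed.
Lemma dl_div f g x a b : derivable_pt_lim f x a -> derivable_pt_lim g x b -> g x <> 0 ->
  derivable_pt_lim (fun t => f t / g t) x (a * / g x + f x * (- / (g x * g x) * b)).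
Proof. intros. unfold Rdiv. apply (dl_mul f (fun t => / g t)); auto. apply dl_inv; auto. Qed.
Lemma dl_exp f x a : derivable_pt_lim f x a ->
  derivable_pt_lim (fun t => exp (f t)) x (exp (f x) * a).
Proof. intros. apply (derivable_pt_lim_comp f exp); auto. apply derivable_pt_lim_exp. Qed.
Lemma dl_sqrt f x a : derivable_pt_lim f x a -> 0 < f x ->
  derivable_pt_lim (fun t => sqrt (f t)) x (/ (2 * sqrt (f x)) * a).
Proof. intros. apply (derivable_pt_lim_comp f sqrt); auto. apply derivable_pt_lim_sqrt; auto. Qed.
Lemma dl_ln f x a : derivable_pt_lim f x a -> 0 < f x ->
  derivable_pt_lim (fun t => ln (f t)) x (/ f x * a).
Proof. intros. apply (derivable_pt_lim_comp f ln); auto. apply derivable_pt_lim_ln; auto. Qed.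
Lemma dl_pow f x a n : derivable_pt_lim f x a ->
  derivable_pt_lim (fun t => f t ^ n) x (INR n * f x ^ pred n * a).
Proof. intros. apply (derivable_pt_lim_comp f (fun t => t ^ n)); auto. apply derivable_pt_lim_pow. Qed.

Ltac dtac :=
  match goal with
  | |- derivable_pt_lim (fun t => @?A t * @?B t) _ _ => apply (dl_mul A B)
  | |- derivable_pt_lim (fun t => @?A t / @?B t) _ _ => apply (dl_div A B)
  | |- derivable_pt_lim (fun t => @?A t + @?B t) _ _ => apply (dl_plus A B)
  | |- derivable_pt_lim (fun t => @?A t - @?B t) _ _ => apply (dl_minus A B)
  | |- derivable_pt_lim (fun t => - @?A t) _ _ => apply (dl_opp A)
  | |- derivable_pt_lim (fun t => / @?A t) _ _ => apply (dl_inv A)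
  | |- derivable_pt_lim (fun t => exp (@?A t)) _ _ => apply (dl_exp A)
  | |- derivable_pt_lim (fun t => sqrt (@?A t)) _ _ => apply (dl_sqrt A)
  | |- derivable_pt_lim (fun t => ln (@?A t)) _ _ => apply (dl_ln A)
  | |- derivable_pt_lim (fun t => (@?A t) ^ ?n) _ _ => apply (dl_pow A)
  | |- derivable_pt_lim (fun t => t) _ _ => apply dl_id
  | |- derivable_pt_lim (fun t => _) _ _ => apply dl_cst
  end.

Ltac dsolve := repeat (dtac; cbv beta).



Definition sq r := sqrt (1 - r ^ 2).
Definition Lg r := sqrt (- ln r).
Definition Ee x y r := exp (- (phi r x y) ^ 2).
Definition gg r := / (2 * sq r * Lg r ^ 3).
Definition Bf x y r := r * Ee x y r / (sq r * Lg r).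
Definition Dform r x y := (- / sq r - 2 * r * psi r x y * phi r x y / sq r) * Ee x y r.
Definition fexp x y r := r * Dform r x y / (1 - r ^ 2) * rho_density r.
Definition hE x y r := Ee x y r * gg r.

Lemma sq_facts r : 0 < r < 1 -> 0 < sq r /\ sq r * sq r = 1 - r ^ 2.
Proof. intros. unfold sq. assert (0 < 1 - r^2) by nra. split.
  apply sqrt_lt_R0; auto. apply sqrt_sqrt; lra. Qed.
Lemma ln_neg r : 0 < r < 1 -> 0 < - ln r.
Proof. intros. assert (ln r < 0). { rewrite <- ln_1. apply ln_increasing; lra. } lra. Qed.
Lemma Lg_facts r : 0 < r < 1 -> 0 < Lg r /\ Lg r * Lg r = - ln r.
Proof. intros. unfold Lg. pose proof (ln_neg r H). split.
  apply sqrt_lt_R0; auto. apply sqrt_sqrt; lra. Qed.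

Lemma dY r x y : 0 < r < 1 ->
  derivable_pt_lim (fun y' => psi r x y' * exp (- (phi r x y') ^ 2)) y (Dform r x y).
Proof.
  intros Hr. destruct (sq_facts r Hr) as [HS HS2].
  unfold psi, phi. eapply dl_ext. dsolve. all: try fold (sq r).
  all: try (nra || lra).
  unfold Dform, Ee, phi, psi. fold (sq r). simpl INR. simpl pred. field. lra.
Qed.

Lemma D_eq (D : R -> R -> R -> R) :
  (forall r x y, 0 < r < 1 ->
     derivable_pt_lim (fun y' => psi r x y' * exp (- (phi r x y') ^ 2)) y (D r x y)) ->
  forall r x y, 0 < r < 1 -> D r x y = Dform r x y.
Proof. intros HD r x y Hr. eapply uniqueness_limite. apply HD; auto. apply dY; auto. Qed.

Lemma dB x y r : 0 < r < 1 -> derivable_pt_lim (Bf x y) r (hE x y r - fexp x y r).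
Proof.
  intros Hr. destruct (sq_facts r Hr) as [HS HS2]. destruct (Lg_facts r Hr) as [HL HL2].
  pose proof (ln_neg r Hr).
  unfold Bf, Ee, phi, sq, Lg. eapply dl_ext. dsolve.
  all: try fold (sq r); try fold (Lg r).
  all: try (nra || lra).
  all: try (apply Rmult_integral_contrapositive; split; lra).
  unfold hE, fexp, gg, Dform, rho_density, Ee, phi, psi. fold (sq r). fold (Lg r).
  simpl INR; simpl pred.
  set (E := exp (- ((r * y - x) / sq r) ^ 2)). set (S := sq r) in *. set (L := Lg r) in *.
  rewrite <- HS2. field_simplify; try lra. f_equal. apply Rminus_diag_uniq. match goal with |- ?A - ?B = 0 => replace (A - B) with (E * L ^ 2 * (S * S - (1 - r ^ 2)) * (-4 * r^2 * y^2 + 4 * r * y * x + 2 * S ^ 2)) by ring end. rewrite HS2. ring.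
Qed.

Ltac side r Hr :=
  let HS := fresh "HS" in let HL := fresh "HL" in let HS2 := fresh "HS2" in
  let HL2 := fresh "HL2" in let Hn := fresh "Hn" in
  destruct (sq_facts r Hr) as [HS HS2]; destruct (Lg_facts r Hr) as [HL HL2];
  pose proof (ln_neg r Hr) as Hn;
  repeat first [ progress fold (sq r) | progress fold (Lg r) ]; 
  first [ nra | lra | (apply Rmult_integral_contrapositive; split; (lra || apply pow_nonzero; lra))
        | (repeat apply Rmult_integral_contrapositive; repeat split; try apply pow_nonzero; lra) ].

Lemma cont_hE x y r : 0 < r < 1 -> continuity_pt (hE x y) r.
Proof.
  intros Hr. apply derivable_continuous_pt. econstructor.
  unfold derivable_pt_abs, hE, gg, Ee, phi, sq, Lg. dsolve. all: side r Hr.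
Qed.

Lemma cont_fexp x y r : 0 < r < 1 -> continuity_pt (fexp x y) r.
Proof.
  intros Hr. apply derivable_continuous_pt. econstructor.
  unfold derivable_pt_abs, fexp, Dform, rho_density, Ee, phi, psi, sq, Lg. dsolve. all: side r Hr.
Qed.


Lemma exp_5 t : exp (5 * t) = exp t ^ 5.
Proof. replace (5 * t) with (t + t + t + t + t) by ring. rewrite !exp_plus. ring. Qed.

Lemma exp_bound z : 0 <= z -> exp (- z) * (1 + z) * z ^ 4 <= 3125.
Proof.
  intros Hz. assert (H1 : (1 + z) * z ^ 4 / 3125 <= exp z).
  { replace z with (5 * (z / 5)) at 3 by field. rewrite exp_5.
    pose proof (exp_ineq1_le (z/5)).
    apply Rle_trans with ((1 + z/5) ^ 5).
    - assert (0 <= z/5) by lra. set (t := z / 5) in *. replace z with (5 * t) by (unfold t; field).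
      nra.
    - apply pow_incr. split; [lra|auto]. }
  assert (exp (- z) * exp z = 1) by (rewrite <- exp_plus; replace (-z+z) with 0 by ring; apply exp_0).
  pose proof (exp_pos (-z)).
  assert (0 <= (1 + z) * z ^ 4) by (apply Rmult_le_pos; [lra| apply pow_le; lra]).
  replace (exp (- z) * (1 + z) * z ^ 4) with (exp (-z) * ((1 + z) * z ^ 4)) by ring.
  apply Rle_trans with (exp (-z) * (3125 * exp z)); [| lra].
  apply Rmult_le_compat_l; lra.
Qed.

Lemma exp_bound1 z : exp (- z) * (1 + z) <= 1.
Proof.
  pose proof (exp_ineq1_le z). pose proof (exp_pos (-z)).
  assert (exp (- z) * exp z = 1) by (rewrite <- exp_plus; replace (-z+z) with 0 by ring; apply exp_0).
  nra.
Qed.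

Lemma ln_le r : 0 < r -> ln r <= r - 1.
Proof. intros. pose proof (exp_ineq1_le (ln r)). rewrite exp_ln in H0; lra. Qed.

Lemma SL_facts r : 0 < r < 1 ->
  0 < sq r /\ sq r <= 1 /\ 1 - r <= sq r ^ 2 /\ sq r ^ 2 <= 2 * (1 - r) /\
  0 < Lg r /\ 1 - r <= Lg r ^ 2 /\ sq r <= 2 * Lg r /\ sq r ^ 2 = 1 - r ^ 2.
Proof.
  intros Hr. destruct (sq_facts r Hr) as [HS HS2]. destruct (Lg_facts r Hr) as [HL HL2].
  pose proof (ln_le r ltac:(lra)).
  assert (sq r ^ 2 = 1 - r^2) by (simpl; lra).
  assert (1 - r <= Lg r ^ 2) by (simpl; lra).
  repeat split; try lra; try nra.
Qed.

Definition dlt A Y := Rmin (1/2) (A / (2 * Y + 2)).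
Definition Kb A Y := 800000 / A ^ 8 + / (dlt A Y) ^ 3.

Lemma dlt_pos A Y : 0 < A -> 0 <= Y -> 0 < dlt A Y /\ dlt A Y <= 1/2 /\ dlt A Y * (2*Y+2) <= A.
Proof.
  intros. unfold dlt, Rmin. destruct Rle_dec.
  - repeat split; try lra. apply Rmult_le_reg_r with (/ (2*Y+2)).
    apply Rinv_0_lt_compat; lra. rewrite Rmult_assoc, Rinv_r; lra.
  - assert (0 < A / (2 * Y + 2)) by (apply Rdiv_lt_0_compat; lra).
    repeat split; try lra. unfold Rdiv. rewrite Rmult_assoc, Rinv_l; lra.
Qed.

Lemma Kb_pos A Y : 0 < A -> 0 <= Y -> 0 < Kb A Y.
Proof.
  intros. destruct (dlt_pos A Y H H0) as [H1 _]. unfold Kb.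
  assert (0 < 800000 / A ^ 8) by (apply Rdiv_lt_0_compat; [lra| apply pow_lt; lra]).
  assert (0 < / dlt A Y ^ 3) by (apply Rinv_0_lt_compat, pow_lt; lra). lra.
Qed.

Lemma P_bound x y A r : 0 < A -> A <= Rabs (x - y) -> 0 < r < 1 ->
  Ee x y r * (1 + (phi r x y) ^ 2) <= Kb A (Rabs y) * sq r ^ 5.
Proof.
  intros HA HAa Hr.
  destruct (SL_facts r Hr) as [HS [HS1 [HS2 [HS3 [HL [HL2 [HSL HSS]]]]]]].
  pose proof (Rabs_pos y) as HY.
  destruct (dlt_pos A (Rabs y) HA HY) as [Hd1 [Hd2 Hd3]].
  set (S := sq r) in *. set (d := dlt A (Rabs y)) in *.
  set (z := (phi r x y) ^ 2).
  assert (Hz : z * S ^ 2 = (x - r * y) ^ 2).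
  { unfold z, phi. change (sqrt (1 - r ^ 2)) with S. field. lra. }
  assert (Hz0 : 0 <= z) by (unfold z; apply pow2_ge_0).
  unfold Ee. fold z.
  pose proof (exp_pos (-z)).
  assert (HK1 : 0 <= 800000 / A ^ 8) by (apply Rlt_le, Rdiv_lt_0_compat; [lra| apply pow_lt; lra]).
  assert (HK2 : 0 <= / d ^ 3) by (apply Rlt_le, Rinv_0_lt_compat, pow_lt; lra).
  assert (HS5 : 0 <= S ^ 5) by (apply pow_le; lra).
  unfold Kb. fold d.
  destruct (Rle_dec (1 - r) d) as [Hc|Hc].
  -
    assert (Hw : A / 2 <= Rabs (x - r * y)).
    { replace (x - r * y) with ((x - y) + (1 - r) * y) by ring.
      pose proof (Rabs_triang_inv (x - y) (- ((1 - r) * y))) as T.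
      replace (x - y - - ((1 - r) * y)) with ((x - y) + (1 - r) * y) in T by ring.
      rewrite Rabs_Ropp, Rabs_mult, (Rabs_right (1 - r)) in T by lra.
      assert ((1 - r) * Rabs y <= d * Rabs y) by (apply Rmult_le_compat_r; lra).
      nra. }
    assert (Hw2 : A ^ 2 / 4 <= (x - r * y) ^ 2).
    { rewrite <- (pow2_abs (x - r * y)). apply Rle_trans with ((A/2)^2); [right; field | apply pow_incr; lra]. }
    assert (HA8 : A ^ 8 <= 256 * z ^ 4 * S ^ 8).
    { replace (256 * z ^ 4 * S ^ 8) with ((4 * (z * S^2)) ^ 4) by ring.
      replace (A ^ 8) with ((A ^ 2) ^ 4) by ring.
      apply pow_incr. split. nra. lra. }
    pose proof (exp_bound z Hz0) as EB.
    assert (HE : exp (- z) * (1 + z) * A ^ 8 <= 800000 * S ^ 8).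
    { apply Rle_trans with (exp (- z) * (1 + z) * (256 * z ^ 4 * S ^ 8)).
      apply Rmult_le_compat_l; [nra|lra].
      replace (exp (- z) * (1 + z) * (256 * z ^ 4 * S ^ 8)) with
        (256 * S ^ 8 * (exp (- z) * (1 + z) * z ^ 4)) by ring.
      assert (0 <= S ^ 8) by (apply pow_le; lra). nra. }
    assert (S ^ 8 <= S ^ 5).
    { replace (S ^ 8) with (S ^ 5 * S ^ 3) by ring. 
      assert (S ^ 3 <= 1) by (rewrite <- (pow1 3); apply pow_incr; lra).
      nra. }
    apply Rle_trans with (800000 / A ^ 8 * S ^ 5); [| nra].
    assert (0 < A ^ 8) by (apply pow_lt; lra).
    apply Rmult_le_reg_r with (A ^ 8); [lra|].
    replace (800000 / A ^ 8 * S ^ 5 * A ^ 8) with (800000 * S ^ 5) by (field; lra).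
    lra.
  - assert (d ^ 3 <= S ^ 5).
    { apply Rle_trans with ((S ^ 2) ^ 3). apply pow_incr; lra.
      replace ((S ^ 2) ^ 3) with (S ^ 5 * S) by ring. nra. }
    pose proof (exp_bound1 z).
    assert (0 < d ^ 3) by (apply pow_lt; lra).
    apply Rle_trans with (/ d ^ 3 * S ^ 5); [| nra].
    apply Rmult_le_reg_l with (d ^ 3); [lra|].
    replace (d ^ 3 * (/ d ^ 3 * S ^ 5)) with (S ^ 5) by (field; lra). nra.
Qed.

Lemma div_le a b c : 0 < b -> a <= c * b -> a / b <= c.
Proof. intros. apply Rmult_le_reg_r with b; auto. unfold Rdiv. rewrite Rmult_assoc, Rinv_l; lra. Qed.

Lemma E_pos x y r : 0 < Ee x y r.
Proof. apply exp_pos. Qed.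

Lemma hE_bound x y A r : 0 < A -> A <= Rabs (x - y) -> 0 < r < 1 ->
  0 <= hE x y r <= 4 * Kb A (Rabs y).
Proof.
  intros HA HAa Hr. pose proof (P_bound x y A r HA HAa Hr) as HP.
  destruct (SL_facts r Hr) as [HS [HS1 [HS2 [HS3 [HL [HL2 [HSL HSS]]]]]]].
  pose proof (E_pos x y r). pose proof (Kb_pos A (Rabs y) HA (Rabs_pos y)).
  set (K := Kb A (Rabs y)) in *. set (S := sq r) in *. set (L := Lg r) in *.
  set (E := Ee x y r) in *. set (z := phi r x y ^ 2) in *.
  assert (0 <= z) by (unfold z; apply pow2_ge_0).
  assert (E <= K * S ^ 5) by nra.
  assert (HL3 : 0 < 2 * S * L ^ 3) by (apply Rmult_lt_0_compat; [lra| apply pow_lt; lra]).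
  unfold hE, gg. fold S L E. split.
  - apply Rmult_le_pos; [lra| apply Rlt_le, Rinv_0_lt_compat; auto].
  - change (E / (2 * S * L ^ 3) <= 4 * K). apply div_le; auto.
    assert (S ^ 3 <= 8 * L ^ 3) by (replace (8 * L ^ 3) with ((2 * L) ^ 3) by ring; apply pow_incr; lra).
    assert (S ^ 5 <= S ^ 4) by (replace (S ^ 5) with (S ^ 4 * S) by ring; assert (0 <= S ^ 4) by (apply pow_le; lra); nra).
    assert (0 <= S ^ 3) by (apply pow_le; lra).
    assert (S ^ 4 <= 8 * S * L ^ 3) by (replace (S ^ 4) with (S * S ^ 3) by ring; nra).
    nra.
Qed.

Lemma psi_rel r x y : 0 < r < 1 -> psi r x y = - r * phi r x y - y * sq r.
Proof.
  intros Hr. destruct (SL_facts r Hr) as [HS [_ [_ [_ [_ [_ [_ HSS]]]]]]].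
  assert (Hq : psi r x y * sq r = r * x - y) by (unfold psi; fold (sq r); field; lra).
  assert (Hp : phi r x y * sq r = r * y - x) by (unfold phi; fold (sq r); field; lra).
  assert ((psi r x y + r * phi r x y + y * sq r) * sq r = 0).
  { replace ((psi r x y + r * phi r x y + y * sq r) * sq r) with
      (psi r x y * sq r + r * (phi r x y * sq r) + y * (sq r ^ 2)) by ring.
    rewrite Hq, Hp, HSS. ring. }
  apply Rmult_integral in H. destruct H; lra.
Qed.

Lemma fexp_bound x y A r : 0 < A -> A <= Rabs (x - y) -> 0 < r < 1 ->
  Rabs (fexp x y r) <= 4 * (1 + Rabs y) * Kb A (Rabs y).
Proof.
  intros HA HAa Hr. pose proof (P_bound x y A r HA HAa Hr) as HP.
  pose proof (psi_rel r x y Hr) as Hq.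
  destruct (SL_facts r Hr) as [HS [HS1 [HS2 [HS3 [HL [HL2 [HSL HSS]]]]]]].
  pose proof (E_pos x y r). pose proof (Kb_pos A (Rabs y) HA (Rabs_pos y)).
  assert (Hf : fexp x y r = - ((1 + 2 * r * psi r x y * phi r x y) * Ee x y r) / (sq r ^ 3 * Lg r)).
  { unfold fexp, Dform, rho_density. fold (Lg r). rewrite <- HSS. field. lra. }
  rewrite Hf. clear Hf.
  set (K := Kb A (Rabs y)) in *. set (S := sq r) in *. set (L := Lg r) in *.
  set (E := Ee x y r) in *. set (p := phi r x y) in *. set (q := psi r x y) in *.
  set (Y := Rabs y). assert (0 <= Y) by apply Rabs_pos.
  assert (HD : 0 < S ^ 3 * L) by (apply Rmult_lt_0_compat; [apply pow_lt|]; lra).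
  unfold Rdiv. rewrite Rabs_mult, Rabs_Ropp, Rabs_mult, (Rabs_right E) by lra.
  rewrite (Rabs_right (/ (S ^ 3 * L))) by (apply Rle_ge, Rlt_le, Rinv_0_lt_compat; auto).
  assert (Hpa : Rabs p <= 1 + p ^ 2).
  { pose proof (pow2_abs p). pose proof (Rabs_pos p). nra. }
  assert (Hqa : Rabs q <= Rabs p + Y).
  { rewrite Hq. unfold Rminus. eapply Rle_trans. apply Rabs_triang.
    rewrite Rabs_Ropp, !Rabs_mult, Rabs_Ropp.
    rewrite (Rabs_right r) by lra. rewrite (Rabs_right S) by lra. fold Y.
    pose proof (Rabs_pos p). nra. }
  assert (Hm : Rabs (1 + 2 * r * q * p) <= (2 + 2 * Y) * (1 + p ^ 2)).
  { eapply Rle_trans. apply Rabs_triang. rewrite Rabs_R1.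
    rewrite !Rabs_mult. rewrite (Rabs_right 2) by lra. rewrite (Rabs_right r) by lra.
    pose proof (Rabs_pos p). pose proof (Rabs_pos q).
    pose proof (pow2_abs p).
    assert (Rabs q * Rabs p <= Rabs p * Rabs p + Y * Rabs p) by nra.
    assert (0 <= Rabs q * Rabs p) by (apply Rmult_le_pos; auto).
    assert (2 * r * Rabs q * Rabs p <= 2 * (Rabs q * Rabs p)) by nra.
    assert (Rabs p * Rabs p = p ^ 2) by (rewrite <- (pow2_abs p); ring).
    assert (Y * Rabs p <= Y * (1 + p ^ 2)) by (apply Rmult_le_compat_l; lra).
    lra. }
  apply Rle_trans with ((2 + 2 * Y) * (1 + p ^ 2) * E * / (S ^ 3 * L)).
  { apply Rmult_le_compat_r. apply Rlt_le, Rinv_0_lt_compat; auto.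
    apply Rmult_le_compat_r; lra. }
  change ((2 + 2 * Y) * (1 + p ^ 2) * E / (S ^ 3 * L) <= 4 * (1 + Y) * K).
  apply div_le; auto.
  assert (S ^ 5 <= 2 * (S ^ 3 * L)).
  { replace (S ^ 5) with (S ^ 3 * S * S) by ring. assert (0 <= S ^ 3) by (apply pow_le; lra). nra. }
  assert (E * (1 + p ^ 2) <= 2 * K * (S ^ 3 * L)) by nra.
  nra.
Qed.

Lemma Bf_bound x y A r : 0 < A -> A <= Rabs (x - y) -> 0 < r < 1 ->
  0 <= Bf x y r /\ Bf x y r <= 2 * Kb A (Rabs y) * r /\ Bf x y r <= 4 * Kb A (Rabs y) * (1 - r).
Proof.
  intros HA HAa Hr. pose proof (P_bound x y A r HA HAa Hr) as HP.
  destruct (SL_facts r Hr) as [HS [HS1 [HS2 [HS3 [HL [HL2 [HSL HSS]]]]]]].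
  pose proof (E_pos x y r). pose proof (Kb_pos A (Rabs y) HA (Rabs_pos y)).
  set (K := Kb A (Rabs y)) in *. set (S := sq r) in *. set (L := Lg r) in *.
  set (E := Ee x y r) in *. set (z := phi r x y ^ 2) in *.
  assert (0 <= z) by (unfold z; apply pow2_ge_0).
  assert (HE : E <= K * S ^ 5) by nra.
  assert (HD : 0 < S * L) by nra.
  assert (HB : E / (S * L) <= 2 * K * S ^ 3).
  { apply div_le; auto. assert (0 <= S ^ 3) by (apply pow_le; lra).
  assert (S ^ 3 <= S ^ 2) by (replace (S ^ 3) with (S ^ 2 * S) by ring; pattern (S ^ 2) at 2; rewrite <- (Rmult_1_r (S ^ 2)); apply Rmult_le_compat_l; [apply pow2_ge_0|lra]).
    nra. }
  assert (S ^ 3 <= S ^ 2) by (replace (S ^ 3) with (S ^ 2 * S) by ring; assert (0 <= S^2) by nra; nra).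
  assert (0 <= E / (S * L)) by (apply Rlt_le, Rdiv_lt_0_compat; auto).
  assert (S ^ 3 <= 1) by (rewrite <- (pow1 3); apply pow_incr; lra).
  unfold Bf. fold S L E.
  replace (r * E / (S * L)) with (r * (E / (S * L))) by (field; lra).
  assert (Q1 : E / (S * L) <= 2 * K) by nra.
  assert (Q2 : E / (S * L) <= 4 * K * (1 - r)) by nra.
  repeat split.
  - apply Rmult_le_pos; lra.
  - rewrite (Rmult_comm (2 * K) r). apply Rmult_le_compat_l; lra.
  - assert (r * (E / (S * L)) <= E / (S * L)) by nra. lra.
Qed.

Lemma dX x y r : 0 < r < 1 ->
  derivable_pt_lim (fun x' => hE x' y r) x (phi r x y * Ee x y r / (sq r ^ 2 * Lg r ^ 3)).
Proof.
  intros Hr. destruct (SL_facts r Hr) as [HS [HS1 [HS2 [HS3 [HL [HL2 [HSL HSS]]]]]]].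
  unfold hE, gg, Ee, phi. eapply dl_ext. dsolve. all: try (fold (sq r); lra).
  simpl INR; simpl pred. fold (sq r). fold (Lg r).
  { apply Rmult_integral_contrapositive; split; [lra| apply pow_nonzero; lra]. }
  simpl INR; simpl pred. fold (sq r). field. split; lra.
Qed.

Lemma dX_bound x y A r : 0 < A -> A <= Rabs (x - y) -> 0 < r < 1 ->
  Rabs (phi r x y * Ee x y r / (sq r ^ 2 * Lg r ^ 3)) <= 8 * Kb A (Rabs y).
Proof.
  intros HA HAa Hr. pose proof (P_bound x y A r HA HAa Hr) as HP.
  destruct (SL_facts r Hr) as [HS [HS1 [HS2 [HS3 [HL [HL2 [HSL HSS]]]]]]].
  pose proof (E_pos x y r). pose proof (Kb_pos A (Rabs y) HA (Rabs_pos y)).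
  set (K := Kb A (Rabs y)) in *. set (S := sq r) in *. set (L := Lg r) in *.
  set (E := Ee x y r) in *. set (p := phi r x y) in *.
  assert (HD : 0 < S ^ 2 * L ^ 3) by (apply Rmult_lt_0_compat; apply pow_lt; lra).
  unfold Rdiv. rewrite !Rabs_mult. rewrite (Rabs_right E) by lra.
  rewrite (Rabs_right (/ (S ^ 2 * L ^ 3))) by (apply Rle_ge, Rlt_le, Rinv_0_lt_compat; auto).
  change (Rabs p * E / (S ^ 2 * L ^ 3) <= 8 * K). apply div_le; auto.
  assert (Hpa : Rabs p <= 1 + p ^ 2).
  { pose proof (pow2_abs p). pose proof (Rabs_pos p). nra. }
  assert (S ^ 3 <= 8 * L ^ 3) by (replace (8 * L ^ 3) with ((2 * L) ^ 3) by ring; apply pow_incr; lra).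
  assert (S ^ 5 <= 8 * (S ^ 2 * L ^ 3)) by (replace (S ^ 5) with (S ^ 2 * S ^ 3) by ring; assert (0 <= S^2) by nra; nra).
  assert (Rabs p * E <= (1 + p ^ 2) * E) by (apply Rmult_le_compat_r; lra).
  nra.
Qed.


Lemma exp_sq_bound z : 0 <= z -> exp (- z) * (1 + z) ^ 2 <= 4.
Proof.
  intros Hz. assert (H1 : (1 + z) ^ 2 <= 4 * exp z).
  { replace z with (2 * (z / 2)) at 2 by field.
    replace (exp (2 * (z / 2))) with (exp (z/2) ^ 2)
      by (replace (2 * (z/2)) with (z/2 + z/2) by ring; rewrite exp_plus; ring).
    pose proof (exp_ineq1_le (z/2)). nra. }
  assert (exp (- z) * exp z = 1) by (rewrite <- exp_plus; replace (-z+z) with 0 by ring; apply exp_0).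
  pose proof (exp_pos (-z)). nra.
Qed.

Lemma hE_pt x y r : 0 < r < 1 -> hE x y r <= 16 / ((1 - r) + (x - r * y) ^ 2) ^ 2.
Proof.
  intros Hr. destruct (SL_facts r Hr) as [HS [HS1 [HS2 [HS3 [HL [HL2 [HSL HSS]]]]]]].
  set (S := sq r) in *. set (L := Lg r) in *. set (w := x - r * y).
  set (z := phi r x y ^ 2).
  assert (Hz : z * S ^ 2 = w ^ 2).
  { unfold z, phi, w. change (sqrt (1 - r ^ 2)) with S. field. lra. }
  assert (Hz0 : 0 <= z) by (unfold z; apply pow2_ge_0).
  pose proof (exp_sq_bound z Hz0) as EB.
  assert (HEpos : 0 < exp (- z)) by apply exp_pos.
  assert (HE : exp (- z) * (S ^ 2 + w ^ 2) ^ 2 <= 4 * S ^ 4).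
  { replace ((S ^ 2 + w ^ 2) ^ 2) with ((1 + z) ^ 2 * S ^ 4) by (rewrite <- Hz; ring).
    assert (0 <= S ^ 4) by (apply pow_le; lra). nra. }
  assert (HD : 0 < (1 - r) + w ^ 2) by (pose proof (pow2_ge_0 w); lra).
  assert (Hmono : ((1 - r) + w ^ 2) ^ 2 <= (S ^ 2 + w ^ 2) ^ 2).
  { apply pow_incr; split; lra. }
  unfold hE, gg, Ee. fold z. fold S L.
  replace (exp (- z) * / (2 * S * L ^ 3)) with (exp (- z) / (2 * S * L ^ 3)) by reflexivity.
  apply div_le. apply Rmult_lt_0_compat; [lra| apply pow_lt; lra].
  assert (S ^ 3 <= 8 * L ^ 3) by (replace (8 * L ^ 3) with ((2 * L) ^ 3) by ring; apply pow_incr; lra).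
  assert (HD2 : 0 < ((1 - r) + w ^ 2) ^ 2) by (apply pow_lt; lra).
  apply Rmult_le_reg_r with (((1 - r) + w ^ 2) ^ 2); auto.
  replace (16 / ((1 - r) + w ^ 2) ^ 2 * (2 * S * L ^ 3) * ((1 - r) + w ^ 2) ^ 2)
    with (32 * S * L ^ 3) by (field; lra).
  assert (exp (- z) * ((1 - r) + w ^ 2) ^ 2 <= exp (- z) * (S ^ 2 + w ^ 2) ^ 2)
    by (apply Rmult_le_compat_l; lra).
  assert (S ^ 4 <= 8 * S * L ^ 3) by (replace (S ^ 4) with (S * S ^ 3) by ring; nra).
  nra.
Qed.

Lemma dH1 a r : 0 < a -> r < 1 ->
  derivable_pt_lim (fun t => 16 / (1 - t + a ^ 2 / 4)) r (16 / (1 - r + a ^ 2 / 4) ^ 2).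
Proof.
  intros Ha Hr. assert (0 < a ^ 2) by (apply pow_lt; lra).
  eapply dl_ext. dsolve. lra. lra. simpl INR; simpl pred. field. lra.
Qed.

Lemma dH2 x y q r : 0 < q -> y <> 0 ->
  derivable_pt_lim (fun t => - 16 * (x - t * y) / (q ^ 3 * y * sqrt (q ^ 2 + (x - t * y) ^ 2))) r
    (16 / (q * (q ^ 2 + (x - r * y) ^ 2) * sqrt (q ^ 2 + (x - r * y) ^ 2))).
Proof.
  intros Hq Hy.
  assert (HP : 0 < q ^ 2 + (x - r * y) ^ 2) by (pose proof (pow2_ge_0 (x - r*y)); pose proof (pow_lt q 2 Hq); lra).
  assert (HQ : 0 < sqrt (q ^ 2 + (x - r * y) ^ 2)) by (apply sqrt_lt_R0; auto).
  assert (HQ2 : sqrt (q ^ 2 + (x - r * y) ^ 2) * sqrt (q ^ 2 + (x - r * y) ^ 2) = q ^ 2 + (x - r * y) ^ 2)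
    by (apply sqrt_sqrt; lra).
  eapply dl_ext. dsolve. all: try lra.
  all: try (apply Rmult_integral_contrapositive; split; [apply Rmult_integral_contrapositive; split; [apply pow_nonzero|]|]; lra).
  - simpl INR; simpl pred. set (Q := sqrt (q ^ 2 + (x - r * y) ^ 2)) in *.
    set (w := x - r * y) in *.
    field_simplify; try (repeat split; lra).
    replace (Q ^ 2) with (q ^ 2 + w ^ 2) by (rewrite <- HQ2; ring).
    replace (Q ^ 3) with (Q * (q ^ 2 + w ^ 2)) by (rewrite <- HQ2; ring).
    assert (q ^ 3 <> 0) by (apply pow_nonzero; lra).
    field. repeat split; try lra.
    replace (w ^ 2 * q * Q + q ^ 3 * Q) with (q * Q * (q^2 + w^2)) by ring.
    apply Rgt_not_eq. apply Rmult_lt_0_compat; [apply Rmult_lt_0_compat|]; lra.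
Qed.

Lemma w_lower x y r : 0 < r < 1 -> Rabs (x - y) - (1 - r) * Rabs y <= Rabs (x - r * y).
Proof.
  intros Hr. replace (x - r * y) with ((x - y) + (1 - r) * y) by ring.
  pose proof (Rabs_triang_inv (x - y) (- ((1 - r) * y))) as T.
  replace (x - y - - ((1 - r) * y)) with ((x - y) + (1 - r) * y) in T by ring.
  rewrite Rabs_Ropp, Rabs_mult, (Rabs_right (1 - r)) in T by lra. lra.
Qed.

Lemma pt_case1 e w a : 0 < e -> 0 < a -> a / 2 <= Rabs w ->
  16 / (e + w ^ 2) ^ 2 <= 16 / (e + a ^ 2 / 4) ^ 2.
Proof.
  intros He Ha Hw. assert (a ^ 2 / 4 <= w ^ 2).
  { rewrite <- (pow2_abs w). apply Rle_trans with ((a/2)^2); [right; field| apply pow_incr; lra]. }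
  assert (0 < a ^ 2) by (apply pow_lt; lra).
  unfold Rdiv. apply Rmult_le_compat_l; [lra|]. apply Rinv_le_contravar.
  apply pow_lt; lra. apply pow_incr; lra.
Qed.

Lemma pt_case2 e w q : 0 < q -> q ^ 2 <= e ->
  16 / (e + w ^ 2) ^ 2 <= 16 / (q * (q ^ 2 + w ^ 2) * sqrt (q ^ 2 + w ^ 2)).
Proof.
  intros Hq He.
  assert (HP : 0 < q ^ 2 + w ^ 2) by (pose proof (pow2_ge_0 w); pose proof (pow_lt q 2 Hq); lra).
  assert (HQ : q <= sqrt (q ^ 2 + w ^ 2)).
  { rewrite <- (sqrt_pow2 q) at 1 by lra. apply sqrt_le_1_alt. pose proof (pow2_ge_0 w); lra. }
  assert (HQ2 : sqrt (q ^ 2 + w ^ 2) * sqrt (q ^ 2 + w ^ 2) = q ^ 2 + w ^ 2) by (apply sqrt_sqrt; lra).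
  unfold Rdiv. apply Rmult_le_compat_l; [lra|]. apply Rinv_le_contravar.
  apply Rmult_lt_0_compat; [apply Rmult_lt_0_compat|]; lra.
  apply Rle_trans with ((q ^ 2 + w ^ 2) ^ 2).
  - replace ((q ^ 2 + w ^ 2) ^ 2) with ((q ^ 2 + w ^ 2) * (sqrt (q ^ 2 + w ^ 2) * sqrt (q ^ 2 + w ^ 2)))
      by (rewrite HQ2; ring).
    replace (q * (q ^ 2 + w ^ 2) * sqrt (q ^ 2 + w ^ 2)) with ((q ^ 2 + w ^ 2) * (q * sqrt (q ^ 2 + w ^ 2))) by ring.
    apply Rmult_le_compat_l; [lra|]. apply Rmult_le_compat_r; lra.
  - apply pow_incr. split; lra.
Qed.

Lemma H2_bound x y q t : 0 < q -> y <> 0 ->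
  Rabs (- 16 * (x - t * y) / (q ^ 3 * y * sqrt (q ^ 2 + (x - t * y) ^ 2))) <= 16 / (q ^ 3 * Rabs y).
Proof.
  intros Hq Hy. set (w := x - t * y).
  assert (HP : 0 < q ^ 2 + w ^ 2) by (pose proof (pow2_ge_0 w); pose proof (pow_lt q 2 Hq); lra).
  assert (HQ : 0 < sqrt (q ^ 2 + w ^ 2)) by (apply sqrt_lt_R0; auto).
  assert (Hw : Rabs w <= sqrt (q ^ 2 + w ^ 2)).
  { rewrite <- sqrt_Rsqr_abs. apply sqrt_le_1_alt. unfold Rsqr. pose proof (pow_lt q 2 Hq). simpl in *. lra. }
  assert (Hq3 : 0 < q ^ 3) by (apply pow_lt; lra).
  assert (HY : 0 < Rabs y) by (apply Rabs_pos_lt; auto).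
  unfold Rdiv. rewrite !Rabs_mult, Rabs_inv, !Rabs_mult.

  rewrite (Rabs_right (q ^ 3)) by lra. rewrite (Rabs_right (sqrt _)) by lra.
  replace (Rabs (-16)) with 16 by (rewrite Rabs_left; lra).
  apply Rmult_le_reg_r with (q ^ 3 * Rabs y * sqrt (q ^ 2 + w ^ 2)).
  apply Rmult_lt_0_compat; [apply Rmult_lt_0_compat|]; lra.
  replace (16 * Rabs w * / (q ^ 3 * Rabs y * sqrt (q ^ 2 + w ^ 2)) * (q ^ 3 * Rabs y * sqrt (q ^ 2 + w ^ 2)))
    with (16 * Rabs w) by (field; repeat split; lra).
  replace (16 * / (q ^ 3 * Rabs y) * (q ^ 3 * Rabs y * sqrt (q ^ 2 + w ^ 2)))
    with (16 * sqrt (q ^ 2 + w ^ 2)) by (field; repeat split; lra).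
  lra.
Qed.

Lemma sqrt_mult_le a b q : 0 < q -> 0 <= a -> 0 <= b -> a * b <= 4 * q ^ 2 -> sqrt (a * b) <= 2 * q.
Proof.
  intros Hq Ha Hb H. rewrite <- (sqrt_pow2 (2 * q)) by lra. apply sqrt_le_1_alt.
  replace ((2 * q) ^ 2) with (4 * q ^ 2) by ring. auto.
Qed.

Lemma hE_int_bound x y rB u v (pr : Riemann_integrable (hE x y) u v) :
  0 < rB -> rB < Rabs (x - y) -> Rabs y * rB <= 2 -> 0 < u -> u <= v -> v < 1 ->
  RiemannInt pr <= 64 / Rabs (x - y) ^ 2 + 128 / (Rabs (x - y) * sqrt (Rabs (x - y) * rB)).
Proof.
  intros HrB Ha HY Hu Huv Hv.
  set (a := Rabs (x - y)) in *. set (Y := Rabs y) in *.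
  assert (HY0 : 0 <= Y) by apply Rabs_pos.
  assert (Ha0 : 0 < a) by lra.
  assert (Ha2 : 0 < a ^ 2) by (apply pow_lt; lra).
  assert (Hsq : 0 < sqrt (a * rB)) by (apply sqrt_lt_R0; nra).
  assert (T2 : 0 <= 128 / (a * sqrt (a * rB))) by (apply Rlt_le, Rdiv_lt_0_compat; nra).
  set (h1 := fun t => 16 / (1 - t + a ^ 2 / 4) ^ 2).
  set (H1 := fun t => 16 / (1 - t + a ^ 2 / 4)).
  assert (dh1 : forall t, u <= t <= v -> derivable_pt_lim H1 t (h1 t)).
  { intros t Ht. apply dH1; lra. }
  assert (ch1 : forall t, u <= t <= v -> continuity_pt h1 t).
  { intros t Ht. apply derivable_continuous_pt. econstructor. unfold derivable_pt_abs, h1.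
    dsolve. all: try lra. apply pow_nonzero; lra. }
  assert (H1v : H1 v <= 64 / a ^ 2).
  { unfold H1. unfold Rdiv. replace (64 * / a ^ 2) with (16 * / (a ^ 2 / 4)) by (field; lra).
    apply Rmult_le_compat_l; [lra|]. apply Rinv_le_contravar; lra. }
  assert (H1u : 0 <= H1 u) by (unfold H1; apply Rlt_le, Rdiv_lt_0_compat; lra).
  destruct (Rle_dec Y (a / 2)) as [HYa|HYa].
  -
    assert (pr1 : Riemann_integrable h1 u v) by (apply continuity_implies_RiemannInt; auto).
    apply Rle_trans with (RiemannInt pr1).
    + apply RiemannInt_P19; auto. intros t Ht.
      eapply Rle_trans. apply hE_pt; lra. unfold h1.
      apply pt_case1; try lra. pose proof (w_lower x y t ltac:(lra)) as Hwl. fold a Y in Hwl.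
      assert ((1 - t) * Y <= Y) by nra. lra.
    + rewrite (FTC_loc h1 H1 u v pr1 Huv ch1 dh1). lra.
  -
    assert (Hy : y <> 0) by (intro E; unfold Y in HYa; rewrite E, Rabs_R0 in HYa; lra).
    assert (HYp : 0 < Y) by lra.
    set (q := sqrt (a / (2 * Y))).
    assert (Hq2 : q ^ 2 = a / (2 * Y)) by (unfold q; rewrite <- Rsqr_pow2; apply Rsqr_sqrt; apply Rlt_le, Rdiv_lt_0_compat; lra).
    assert (Hq : 0 < q) by (apply sqrt_lt_R0, Rdiv_lt_0_compat; lra).
    set (h2 := fun t => 16 / (q * (q ^ 2 + (x - t * y) ^ 2) * sqrt (q ^ 2 + (x - t * y) ^ 2))).
    set (H2 := fun t => - 16 * (x - t * y) / (q ^ 3 * y * sqrt (q ^ 2 + (x - t * y) ^ 2))).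
    assert (dh : forall t, u <= t <= v -> derivable_pt_lim (fun t => H1 t + H2 t) t (h1 t + h2 t)).
    { intros t Ht. apply (dl_plus H1 H2). apply dh1; auto. apply dH2; auto. }
    assert (ch : forall t, u <= t <= v -> continuity_pt (fun t => h1 t + h2 t) t).
    { intros t Ht. apply continuity_pt_plus. apply ch1; auto.
      apply derivable_continuous_pt. econstructor. unfold derivable_pt_abs, h2.
      assert (0 < q ^ 2 + (x - t * y) ^ 2) by (pose proof (pow2_ge_0 (x - t*y)); pose proof (pow_lt q 2 Hq); lra).
      assert (0 < sqrt (q ^ 2 + (x - t * y) ^ 2)) by (apply sqrt_lt_R0; auto).
      dsolve. all: try lra.
      apply Rmult_integral_contrapositive; split; [apply Rmult_integral_contrapositive; split|]; lra. }
    assert (pr1 : Riemann_integrable (fun t => h1 t + h2 t) u v) by (apply continuity_implies_RiemannInt; auto).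
    apply Rle_trans with (RiemannInt pr1).
    + apply RiemannInt_P19; auto. intros t Ht.
      assert (0 <= h2 t).
      { unfold h2. assert (0 < q ^ 2 + (x - t * y) ^ 2) by (pose proof (pow2_ge_0 (x - t*y)); pose proof (pow_lt q 2 Hq); lra).
        assert (0 < sqrt (q ^ 2 + (x - t * y) ^ 2)) by (apply sqrt_lt_R0; auto).
        apply Rlt_le, Rdiv_lt_0_compat; [lra|]. apply Rmult_lt_0_compat; [apply Rmult_lt_0_compat|]; lra. }
      assert (0 <= h1 t) by (unfold h1; apply Rlt_le, Rdiv_lt_0_compat; [lra| apply pow_lt; lra]).
      eapply Rle_trans. apply hE_pt; lra.
      destruct (Rle_dec (a / 2) (Rabs (x - t * y))) as [Hw|Hw].
      * assert (16 / (1 - t + (x - t * y) ^ 2) ^ 2 <= h1 t) by (unfold h1; apply pt_case1; lra). lra.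
      * assert (16 / (1 - t + (x - t * y) ^ 2) ^ 2 <= h2 t).
        { unfold h2. apply pt_case2; auto. rewrite Hq2.
          pose proof (w_lower x y t ltac:(lra)) as Hwl. fold a Y in Hwl.
          apply Rnot_le_lt in Hw.
          apply Rmult_le_reg_r with (2 * Y); [lra|].
          replace (a / (2 * Y) * (2 * Y)) with a by (field; lra). lra. }
        lra.
    + rewrite (FTC_loc _ (fun t => H1 t + H2 t) u v pr1 Huv ch dh).
      pose proof (H2_bound x y q u Hq Hy) as Bu. pose proof (H2_bound x y q v Hq Hy) as Bv.
      change (Rabs (H2 u) <= 16 / (q ^ 3 * Y)) in Bu.
      change (Rabs (H2 v) <= 16 / (q ^ 3 * Y)) in Bv.
      pose proof (Rle_abs (H2 v)). pose proof (Rle_abs (- H2 u)). rewrite Rabs_Ropp in H0.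
      assert (Hfin : 2 * (16 / (q ^ 3 * Y)) <= 128 / (a * sqrt (a * rB))).
      { assert (Hq3 : q ^ 3 * Y = q * (a / 2)).
        { replace (q ^ 3) with (q * q ^ 2) by ring. rewrite Hq2. field. lra. }
        rewrite Hq3.
        assert (sqrt (a * rB) <= 2 * q).
        { apply sqrt_mult_le; try lra. rewrite Hq2.
          apply Rmult_le_reg_r with Y; auto.
          replace (4 * (a / (2 * Y)) * Y) with (2 * a) by (field; lra). nra. }
        unfold Rdiv. apply Rle_trans with (128 * / (a * (2 * q))).
        right. field. split; lra.
        apply Rmult_le_compat_l; [lra|]. apply Rinv_le_contravar. nra.
        apply Rmult_le_compat_l; lra. }
      lra.
Qed.


Lemma hE_RI x y u v : 0 < u -> u <= v -> v < 1 -> Riemann_integrable (hE x y) u v.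
Proof. intros. apply continuity_implies_RiemannInt; auto. intros; apply cont_hE; lra. Qed.

Lemma fexp_RI x y u v : 0 < u -> u <= v -> v < 1 -> Riemann_integrable (fexp x y) u v.
Proof. intros. apply continuity_implies_RiemannInt; auto. intros; apply cont_fexp; lra. Qed.

Lemma hE_lim_exists x y A : 0 < A -> A <= Rabs (x - y) -> exists l, lim01 (hE x y) l.
Proof.
  intros HA Ha. apply (lim01_exists (hE x y) (4 * Kb A (Rabs y))).
  - intros; apply cont_hE; auto.
  - intros t Ht. destruct (hE_bound x y A t HA Ha Ht). rewrite Rabs_right; lra.
Qed.

Lemma int_fexp x y u v (p1 : Riemann_integrable (fexp x y) u v) (p2 : Riemann_integrable (hE x y) u v) :
  0 < u -> u <= v -> v < 1 -> RiemannInt p1 = RiemannInt p2 - (Bf x y v - Bf x y u).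
Proof.
  intros Hu Huv Hv.
  assert (p3 : Riemann_integrable (fun t => hE x y t + -1 * fexp x y t) u v) by (apply RiemannInt_P10; auto).
  pose proof (RiemannInt_P12 p2 p1 p3 Huv) as E1.
  assert (E2 : RiemannInt p3 = Bf x y v - Bf x y u).
  { apply FTC_loc; auto.
    - intros t Ht. apply continuity_pt_plus. apply cont_hE; lra.
      apply continuity_pt_scal. apply cont_fexp; lra.
    - intros t Ht. eapply dl_ext. apply dB; lra. ring. }
  lra.
Qed.

Lemma integral01_f (D : R -> R -> R -> R) x y A l :
  (forall r x y, 0 < r < 1 ->
     derivable_pt_lim (fun y' => psi r x y' * exp (- (phi r x y') ^ 2)) y (D r x y)) ->
  0 < A -> A <= Rabs (x - y) -> lim01 (hE x y) l ->
  integral01 (fun r => r * D r x y / (1 - r ^ 2) * rho_density r) l.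
Proof.
  intros HD HA Ha Hl.
  assert (Heq : forall r, 0 < r < 1 -> r * D r x y / (1 - r ^ 2) * rho_density r = fexp x y r).
  { intros r Hr. unfold fexp. rewrite (D_eq D HD r x y Hr). reflexivity. }
  set (K := Kb A (Rabs y)). pose proof (Kb_pos A (Rabs y) HA (Rabs_pos y)) as HK. fold K in HK.
  split; [|split].
  - intros u v Hu Huv Hv. constructor.
    refine (@Riemann_integrable_ext (fexp x y) _ u v _ (fexp_RI x y u v Hu Huv Hv)).
    intros t Ht. rewrite Rmin_left, Rmax_right in Ht by lra. symmetry; apply Heq; lra.
  - exists (4 * (1 + Rabs y) * K). intros u v pr Hu Huv Hv.
    assert (0 <= 4 * (1 + Rabs y) * K) by (pose proof (Rabs_pos y); nra).
    destruct (RiemannInt_const_bound (l := 0) (u := 4 * (1 + Rabs y) * K) pr Huv) as [_ Hb].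
    { intros t Ht. split. apply Rabs_pos. rewrite Heq by lra. apply fexp_bound; lra. }
    nra.
  - intros eps Heps.
    destruct (Hl (eps / 2)) as [d1 [Hd1 Hdd1]]; [lra|].
    exists (Rmin (Rmin d1 (1/2)) (eps / (12 * K))). split.
    { apply Rmin_pos; [apply Rmin_pos; lra|]. apply Rdiv_lt_0_compat; lra. }
    intros u v pr Hu0 Hu Hv Hv1.
    assert (Hm1 := Rmin_l (Rmin d1 (1/2)) (eps / (12 * K))).
    assert (Hm2 := Rmin_r (Rmin d1 (1/2)) (eps / (12 * K))).
    assert (Hm3 := Rmin_l d1 (1/2)). assert (Hm4 := Rmin_r d1 (1/2)).
    set (d := Rmin (Rmin d1 (1/2)) (eps / (12 * K))) in *.
    assert (Huv : u <= v) by lra.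
    pose proof (fexp_RI x y u v Hu0 Huv Hv1) as pf.
    pose proof (hE_RI x y u v Hu0 Huv Hv1) as ph.
    assert (E1 : RiemannInt pr = RiemannInt pf).
    { apply RiemannInt_P18; auto. intros; apply Heq; lra. }
    rewrite E1, (int_fexp x y u v pf ph Hu0 Huv Hv1).
    specialize (Hdd1 u v ph Hu0 ltac:(lra) ltac:(lra) Hv1).
    destruct (Bf_bound x y A u HA Ha ltac:(lra)) as [Bu1 [Bu2 _]].
    destruct (Bf_bound x y A v HA Ha ltac:(lra)) as [Bv1 [_ Bv3]].
    fold K in Bu2, Bv3.
    assert (HdK : 12 * K * d <= eps).
    { apply Rle_trans with (12 * K * (eps / (12 * K))). apply Rmult_le_compat_l; lra.
      right; field; lra. }
    assert (2 * K * u <= 2 * K * d) by (apply Rmult_le_compat_l; lra).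
    assert (4 * K * (1 - v) <= 4 * K * d) by (apply Rmult_le_compat_l; lra).
    replace (RiemannInt ph - (Bf x y v - Bf x y u) - l) with
      ((RiemannInt ph - l) - Bf x y v + Bf x y u) by ring.
    eapply Rle_lt_trans. apply Rabs_triang.
    eapply Rle_lt_trans. apply Rplus_le_compat_r. apply Rabs_triang.
    rewrite Rabs_Ropp, (Rabs_right (Bf x y v)), (Rabs_right (Bf x y u)) by lra.
    lra.
Qed.

Definition Kfin a rB := 64 / a ^ 2 + 128 / (a * sqrt (a * rB)).

Lemma l_bounds x y rB l : 0 < rB -> rB < Rabs (x - y) -> Rabs y * rB <= 2 ->
  lim01 (hE x y) l -> 0 <= l <= Kfin (Rabs (x - y)) rB.
Proof.
  intros HrB Ha HY Hl. split.
  - apply (lim01_ge (hE x y)); auto.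
    + intros; apply hE_RI; auto.
    + intros u v pr Hu Huv Hv.
      destruct (RiemannInt_const_bound (l := 0) (u := 4 * Kb rB (Rabs y)) pr Huv) as [Hb _].
      { intros t Ht. apply (hE_bound x y rB t); lra. }
      lra.
  - apply (lim01_le (hE x y)); auto.
    + intros; apply hE_RI; auto.
    + intros u v pr Hu Huv Hv. unfold Kfin. apply hE_int_bound; auto.
Qed.

Lemma hE_lip x1 x2 y r A : 0 < r < 1 -> 0 < A ->
  (forall x', Rmin x1 x2 <= x' <= Rmax x1 x2 -> A <= Rabs (x' - y)) ->
  Rabs (hE x1 y r - hE x2 y r) <= 8 * Kb A (Rabs y) * Rabs (x1 - x2).
Proof.
  intros Hr HA Hseg.
  set (f' := fun x' => phi r x' y * Ee x' y r / (sq r ^ 2 * Lg r ^ 3)).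
  pose proof (Kb_pos A (Rabs y) HA (Rabs_pos y)).
  destruct (Rtotal_order x1 x2) as [Hlt|[Heq|Hgt]].
  - destruct (MVT_cor2 (fun x' => hE x' y r) f' x1 x2 Hlt) as [c [Hc1 Hc2]].
    { intros c Hc. apply dX; auto. }
    rewrite Rabs_minus_sym. rewrite Hc1. rewrite Rabs_mult.
    rewrite (Rabs_minus_sym x1 x2). apply Rmult_le_compat_r. apply Rabs_pos.
    apply dX_bound; auto. apply Hseg. rewrite Rmin_left, Rmax_right; lra.
  - subst. rewrite !Rminus_diag, Rabs_R0. lra.
  - destruct (MVT_cor2 (fun x' => hE x' y r) f' x2 x1 Hgt) as [c [Hc1 Hc2]].
    { intros c Hc. apply dX; auto. }
    rewrite Hc1. rewrite Rabs_mult. apply Rmult_le_compat_r. apply Rabs_pos.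
    apply dX_bound; auto. apply Hseg. rewrite Rmin_right, Rmax_left; lra.
Qed.

Lemma l_lip x1 x2 y A l1 l2 : 0 < A ->
  (forall x', Rmin x1 x2 <= x' <= Rmax x1 x2 -> A <= Rabs (x' - y)) ->
  lim01 (hE x1 y) l1 -> lim01 (hE x2 y) l2 ->
  Rabs (l1 - l2) <= 8 * Kb A (Rabs y) * Rabs (x1 - x2).
Proof.
  intros HA Hseg Hl1 Hl2.
  apply (lim01_diff (hE x1 y) (hE x2 y)); auto.
  - intros; apply hE_RI; auto.
  - intros; apply hE_RI; auto.
  - intros u v pr1 pr2 Hu Huv Hv.
    assert (p3 : Riemann_integrable (fun t => hE x1 y t + -1 * hE x2 y t) u v) by (apply RiemannInt_P10; auto).
    pose proof (RiemannInt_P12 pr1 pr2 p3 Huv) as E1.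
    replace (RiemannInt pr1 - RiemannInt pr2) with (RiemannInt p3) by lra.
    eapply Rle_trans. apply (RiemannInt_P17 p3 (RiemannInt_P16 p3) Huv).
    pose proof (Kb_pos A (Rabs y) HA (Rabs_pos y)).
    assert (0 <= 8 * Kb A (Rabs y) * Rabs (x1 - x2)) by (pose proof (Rabs_pos (x1 - x2)); nra).
    destruct (RiemannInt_const_bound (l := 0) (u := 8 * Kb A (Rabs y) * Rabs (x1 - x2)) (RiemannInt_P16 p3) Huv) as [_ Hb].
    { intros t Ht. split. apply Rabs_pos.
      replace (hE x1 y t + -1 * hE x2 y t) with (hE x1 y t - hE x2 y t) by ring.
      apply hE_lip; auto; lra. }
    nra.
Qed.

Definition clamp u v z := Rmax u (Rmin v z).

Lemma clamp_in u v z : u <= v -> u <= clamp u v z <= v.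
Proof. intros. unfold clamp, Rmax, Rmin. repeat destruct Rle_dec; lra. Qed.

Lemma clamp_lip u v z z' : u <= v -> Rabs (clamp u v z - clamp u v z') <= Rabs (z - z').
Proof.
  intros. unfold clamp, Rmax, Rmin. apply Rabs_le.
  pose proof (Rabs_pos (z - z')).
  assert (z - z' <= Rabs (z - z')) by apply Rle_abs.
  assert (- (z - z') <= Rabs (z - z')) by (rewrite <- Rabs_Ropp; apply Rle_abs).
  repeat destruct Rle_dec; lra.
Qed.

Lemma clamp_id u v z : u <= z <= v -> clamp u v z = z.
Proof. intros. unfold clamp, Rmax, Rmin. repeat destruct Rle_dec; lra. Qed.

Lemma lip_RI (F : R -> R) u v L : u <= v -> 0 <= L ->
  (forall a b, u <= a <= v -> u <= b <= v -> Rabs (F a - F b) <= L * Rabs (a - b)) ->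
  Riemann_integrable (fun x => Rabs (F x)) u v.
Proof.
  intros Huv HL Hlip.
  set (G := fun z => Rabs (F (clamp u v z))).
  assert (HG : forall z z', Rabs (G z - G z') <= L * Rabs (z - z')).
  { intros z z'. unfold G. eapply Rle_trans. apply Rabs_triang_inv2.
    eapply Rle_trans. apply Hlip; apply clamp_in; auto.
    apply Rmult_le_compat_l; auto. apply clamp_lip; auto. }
  assert (pr : Riemann_integrable G u v).
  { apply continuity_implies_RiemannInt; auto. intros x Hx.
    unfold continuity_pt, continue_in, limit1_in, limit_in. intros eps Heps.
    exists (eps / (L + 1)). split. apply Rdiv_lt_0_compat; lra.
    intros z [_ Hz]. simpl in *. unfold Rdist in *.
    eapply Rle_lt_trans. apply HG.
    apply Rle_lt_trans with ((L + 1) * Rabs (z - x)).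
    pose proof (Rabs_pos (z - x)); nra.
    apply Rmult_lt_reg_l with (/ (L + 1)). apply Rinv_0_lt_compat; lra.
    rewrite <- Rmult_assoc, Rinv_l, Rmult_1_l by lra. unfold Rdiv in Hz. lra. }
  refine (@Riemann_integrable_ext G _ u v _ pr).
  intros x Hx. rewrite Rmin_left, Rmax_right in Hx by lra. unfold G. rewrite clamp_id; auto.
Qed.

Lemma Kfin_mono a t rB : 0 < rB -> 0 < t <= a -> Kfin a rB <= Kfin t rB.
Proof.
  intros HrB Ht. unfold Kfin.
  assert (Hs1 : 0 < sqrt (t * rB)) by (apply sqrt_lt_R0; nra).
  assert (Hs2 : sqrt (t * rB) <= sqrt (a * rB)) by (apply sqrt_le_1_alt; nra).
  apply Rplus_le_compat; unfold Rdiv; apply Rmult_le_compat_l; try lra;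
  apply Rinv_le_contravar.
  - apply pow_lt; lra.
  - apply pow_incr; lra.
  - nra.
  - apply Rmult_le_compat; lra.
Qed.

Lemma Kfin_pos a rB : 0 < rB -> 0 < a -> 0 <= Kfin a rB.
Proof.
  intros. unfold Kfin. assert (0 < sqrt (a * rB)) by (apply sqrt_lt_R0; nra).
  assert (0 < a ^ 2) by (apply pow_lt; lra).
  assert (0 < 64 / a ^ 2) by (apply Rdiv_lt_0_compat; lra).
  assert (0 < 128 / (a * sqrt (a * rB))) by (apply Rdiv_lt_0_compat; nra). lra.
Qed.

Lemma sqrt_ge_rB t rB : 0 < rB -> rB <= t -> rB <= sqrt (t * rB).
Proof.
  intros. rewrite <- (sqrt_pow2 rB) at 1 by lra. apply sqrt_le_1_alt. simpl. nra.
Qed.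

Lemma left_int (F : R -> R) u1 v1 c rB (p1 : Riemann_integrable F u1 v1) :
  0 < rB -> u1 <= v1 -> v1 <= c - 2 * rB ->
  (forall x, u1 < x < v1 -> F x <= Kfin (c - rB - x) rB) -> RiemannInt p1 <= 320 / rB.
Proof.
  intros HrB Huv Hv HF.
  set (k := fun x => Kfin (c - rB - x) rB).
  set (G := fun x => 64 / (c - rB - x) + 256 / sqrt ((c - rB - x) * rB)).
  assert (dG : forall x, u1 <= x <= v1 -> derivable_pt_lim G x (k x)).
  { intros x Hx. assert (0 < c - rB - x) by lra.
    assert (HS : 0 < sqrt ((c - rB - x) * rB)) by (apply sqrt_lt_R0; nra).
    assert (HS2 : sqrt ((c - rB - x) * rB) * sqrt ((c - rB - x) * rB) = (c - rB - x) * rB)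
      by (apply sqrt_sqrt; nra).
    unfold G, k, Kfin. eapply dl_ext. dsolve. all: try nra.
    simpl INR; simpl pred. set (S := sqrt ((c - rB - x) * rB)) in *. set (t := c - rB - x) in *.
    field_simplify; try (repeat split; nra).
    replace (S ^ 3) with (S * (t * rB)) by (rewrite <- HS2; ring).
    field; repeat split; nra. }
  assert (ck : forall x, u1 <= x <= v1 -> continuity_pt k x).
  { intros x Hx. apply derivable_continuous_pt. econstructor. unfold derivable_pt_abs, k, Kfin.
    assert (0 < c - rB - x) by lra.
    assert (HS : 0 < sqrt ((c - rB - x) * rB)) by (apply sqrt_lt_R0; nra).
    dsolve. all: try nra. all: apply pow_nonzero; lra. }
  assert (pk : Riemann_integrable k u1 v1) by (apply continuity_implies_RiemannInt; auto).
  apply Rle_trans with (RiemannInt pk).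
  { apply RiemannInt_P19; auto. }
  rewrite (FTC_loc k G u1 v1 pk Huv ck dG).
  assert (G u1 >= 0).
  { unfold G. assert (0 < sqrt ((c - rB - u1) * rB)) by (apply sqrt_lt_R0; nra).
    assert (0 < 64 / (c - rB - u1)) by (apply Rdiv_lt_0_compat; lra).
    assert (0 < 256 / sqrt ((c - rB - u1) * rB)) by (apply Rdiv_lt_0_compat; lra). lra. }
  assert (G v1 <= 320 / rB).
  { unfold G. pose proof (sqrt_ge_rB (c - rB - v1) rB HrB ltac:(lra)).
    replace (320 / rB) with (64 / rB + 256 / rB) by (field; lra).
    apply Rplus_le_compat; unfold Rdiv; apply Rmult_le_compat_l; try lra;
    apply Rinv_le_contravar; lra. }
  lra.
Qed.

Lemma right_int (F : R -> R) u2 v2 c rB (p2 : Riemann_integrable F u2 v2) :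
  0 < rB -> c + 2 * rB <= u2 -> u2 <= v2 ->
  (forall x, u2 < x < v2 -> F x <= Kfin (x - c - rB) rB) -> RiemannInt p2 <= 320 / rB.
Proof.
  intros HrB Hu Huv HF.
  set (k := fun x => Kfin (x - c - rB) rB).
  set (G := fun x => - (64 / (x - c - rB)) - 256 / sqrt ((x - c - rB) * rB)).
  assert (dG : forall x, u2 <= x <= v2 -> derivable_pt_lim G x (k x)).
  { intros x Hx. assert (0 < x - c - rB) by lra.
    assert (HS : 0 < sqrt ((x - c - rB) * rB)) by (apply sqrt_lt_R0; nra).
    assert (HS2 : sqrt ((x - c - rB) * rB) * sqrt ((x - c - rB) * rB) = (x - c - rB) * rB)
      by (apply sqrt_sqrt; nra).
    unfold G, k, Kfin. eapply dl_ext. dsolve. all: try nra.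
    simpl INR; simpl pred. set (S := sqrt ((x - c - rB) * rB)) in *. set (t := x - c - rB) in *.
    field_simplify; try (repeat split; nra).
    replace (S ^ 3) with (S * (t * rB)) by (rewrite <- HS2; ring).
    field; repeat split; nra. }
  assert (ck : forall x, u2 <= x <= v2 -> continuity_pt k x).
  { intros x Hx. apply derivable_continuous_pt. econstructor. unfold derivable_pt_abs, k, Kfin.
    assert (0 < x - c - rB) by lra.
    assert (HS : 0 < sqrt ((x - c - rB) * rB)) by (apply sqrt_lt_R0; nra).
    dsolve. all: try nra. all: apply pow_nonzero; lra. }
  assert (pk : Riemann_integrable k u2 v2) by (apply continuity_implies_RiemannInt; auto).
  apply Rle_trans with (RiemannInt pk).
  { apply RiemannInt_P19; auto. }
  rewrite (FTC_loc k G u2 v2 pk Huv ck dG).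
  assert (G v2 <= 0).
  { unfold G. assert (0 < sqrt ((v2 - c - rB) * rB)) by (apply sqrt_lt_R0; nra).
    assert (0 < 64 / (v2 - c - rB)) by (apply Rdiv_lt_0_compat; lra).
    assert (0 < 256 / sqrt ((v2 - c - rB) * rB)) by (apply Rdiv_lt_0_compat; lra). lra. }
  assert (- G u2 <= 320 / rB).
  { unfold G. pose proof (sqrt_ge_rB (u2 - c - rB) rB HrB ltac:(lra)).
    replace (320 / rB) with (64 / rB + 256 / rB) by (field; lra).
    replace (- (- (64 / (u2 - c - rB)) - 256 / sqrt ((u2 - c - rB) * rB))) with
      (64 / (u2 - c - rB) + 256 / sqrt ((u2 - c - rB) * rB)) by ring.
    apply Rplus_le_compat; unfold Rdiv; apply Rmult_le_compat_l; try lra;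
    apply Rinv_le_contravar; lra. }
  lra.
Qed.


Theorem mainTheorem4 :
  forall D : R -> R -> R -> R,
  (forall r x y, 0 < r < 1 ->
     derivable_pt_lim (fun y' => psi r x y' * exp (- (phi r x y') ^ 2)) y (D r x y)) ->
  exists C : R,
  forall c rB : R, admissible c rB ->
  forall y : R, Rabs (y - c) < rB ->
  exists I : R -> R,
    (forall x, 2 * rB <= Rabs (x - c) ->
       integral01 (fun r => r * D r x y / (1 - r ^ 2) * rho_density r) (I x)) /\
    (forall u v, u <= v -> (v <= c - 2 * rB \/ c + 2 * rB <= u) ->
       inhabited (Riemann_integrable (fun x => Rabs (I x)) u v)) /\
    (forall u1 v1 u2 v2
       (p1 : Riemann_integrable (fun x => Rabs (I x)) u1 v1)
       (p2 : Riemann_integrable (fun x => Rabs (I x)) u2 v2),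
       u1 <= v1 -> v1 <= c - 2 * rB -> c + 2 * rB <= u2 -> u2 <= v2 ->
       rB * (RiemannInt p1 + RiemannInt p2) <= C).
Proof.
  intros D HD. exists 640. intros c rB [HrB [HrB1 HrBc]] y Hy.
  assert (HY : Rabs y * rB <= 2).
  { assert (Rabs y <= Rabs c + rB).
    { replace y with (c + (y - c)) by ring. eapply Rle_trans. apply Rabs_triang. lra. }
    rewrite Rmult_comm in HrBc. nra. }
  assert (Hreg : forall x, 2 * rB <= Rabs (x - c) -> rB < Rabs (x - y)).
  { intros x Hx. pose proof (Rabs_triang (x - y) (y - c)).
    replace (x - y + (y - c)) with (x - c) in H by ring. lra. }
  assert (Ex : forall x, exists l, (2 * rB <= Rabs (x - c) -> lim01 (hE x y) l)).
  { intros x. destruct (Rle_dec (2 * rB) (Rabs (x - c))) as [Hx|Hx].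
    - destruct (hE_lim_exists x y rB HrB (Rlt_le _ _ (Hreg x Hx))) as [l Hl].
      exists l; auto.
    - exists 0; intros; contradiction. }
  set (I := fun x => proj1_sig (constructive_indefinite_description _ (Ex x))).
  assert (HI : forall x, 2 * rB <= Rabs (x - c) -> lim01 (hE x y) (I x)).
  { intros x. exact (proj2_sig (constructive_indefinite_description _ (Ex x))). }
  assert (HIb : forall x, 2 * rB <= Rabs (x - c) -> 0 <= I x <= Kfin (Rabs (x - y)) rB).
  { intros x Hx. apply l_bounds; auto. }
  exists I. split; [|split].
  - intros x Hx. apply (integral01_f D x y rB); auto. apply Rlt_le, Hreg; auto.
  - intros u v Huv Hside. constructor.
    assert (Hin : forall x', u <= x' <= v -> 2 * rB <= Rabs (x' - c)).
    { intros x' Hx'. destruct Hside.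
      - rewrite Rabs_left1 by lra. lra.
      - rewrite Rabs_right by lra. lra. }
    apply (lip_RI I u v (8 * Kb rB (Rabs y))); auto.
    { pose proof (Kb_pos rB (Rabs y) HrB (Rabs_pos y)). lra. }
    intros a b Ha Hb. apply l_lip; auto.
    intros x' Hx'. apply Rlt_le, Hreg, Hin.
    split; [apply Rle_trans with (Rmin a b) | apply Rle_trans with (Rmax a b)]; try lra.
    apply Rmin_glb; lra. apply Rmax_lub; lra.
  - intros u1 v1 u2 v2 p1 p2 H1 H2 H3 H4.
    assert (L1 : RiemannInt p1 <= 320 / rB).
    { apply (left_int _ u1 v1 c rB p1 HrB H1 H2). intros x Hx.
      assert (Hr : 2 * rB <= Rabs (x - c)) by (rewrite Rabs_left1 by lra; lra).
      destruct (HIb x Hr) as [Hp Hq]. rewrite Rabs_right by lra.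
      eapply Rle_trans. apply Hq. apply Kfin_mono; auto.
      split; [lra|]. rewrite Rabs_left1.
      - apply Rabs_def2 in Hy. lra.
      - apply Rabs_def2 in Hy. lra. }
    assert (L2 : RiemannInt p2 <= 320 / rB).
    { apply (right_int _ u2 v2 c rB p2 HrB H3 H4). intros x Hx.
      assert (Hr : 2 * rB <= Rabs (x - c)) by (rewrite Rabs_right by lra; lra).
      destruct (HIb x Hr) as [Hp Hq]. rewrite Rabs_right by lra.
      eapply Rle_trans. apply Hq. apply Kfin_mono; auto.
      split; [lra|]. rewrite Rabs_right.
      - apply Rabs_def2 in Hy. lra.
      - apply Rabs_def2 in Hy. lra. }
    assert (rB * (RiemannInt p1 + RiemannInt p2) <= rB * (640 / rB)).
    { apply Rmult_le_compat_l; lra. }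
    replace (rB * (640 / rB)) with 640 in H by (field; lra). lra.
Qed.
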